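(* Let $q\in(0,1]$. Consider the parametric convex semi-infinite problem described in the context, let $((\bar c,\bar b),\bar x)\in\operatorname{gph}\mathcal{S}$, and assume that $\mathcal{L}$ is not $q$-order calm at $((f(\bar x)+\langle\bar c,\bar x\rangle,\bar b),\bar x)\in\operatorname{gph}\mathcal{L}$. Then there exist a sequence $(x^r)_{r\in\mathbb{N}}$ in $\mathbb{R}^n$ converging to $\bar x$ with $\bar f(x^r)>0$ and $\bar f(x^r)\downarrow0$, and a sequence $(v^r)_{r\in\mathbb{N}}$ with $v^r\in\partial\bar f(x^r)\setminus\{0_n\}$, such that $v^r\to0_n$ and $$d(x^r,\mathcal{S}(\bar c,\bar b))\ge\frac{\bar f(x^r)}{\|v^r\|}\quad\text{for all } r.$$
   Context: Setting: $T$ is a compact subset of a metric space $Z$ with $T\neq Z$; $f:\mathbb{R}^n\to\mathbb{R}$ and $g_t:\mathbb{R}^n\to\mathbb{R}$ ($t\in T$) are convex, with $(t,x)\mapsto g_t(x)$ continuous on $T\times\mathbb{R}^n$. $\mathcal{C}(T,\mathbb{R})$ is the space of continuous $b:T\to\mathbb{R}$, $t\mapsto b_t$, with $\|b\|_\infty=\max_t|b_t|$. For $(c,b)\in\mathbb{R}^n\times\mathcal{C}(T,\mathbb{R})$, $P(c,b)$: minimize $f(x)+\langle c,x\rangle$ subject to $g_t(x)\le b_t$, $t\in T$; $\mathcal{S}(c,b)$ is its optimal solution set. $\mathcal{L}(\alpha,b)=\{x: f(x)+\langle\bar c,x\rangle\le\alpha,\ g_t(x)\le b_t,\ t\in T\}$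 on $\mathbb{R}\times\mathcal{C}(T,\mathbb{R})$ normed by $\max\{|\alpha|,\|b\|_\infty\}$. $\bar f(x):=\sup\{f(x)-f(\bar x)+\langle\bar c,x-\bar x\rangle;\ g_t(x)-\bar b_t,\ t\in T\}$. $\partial$ is the convex subdifferential; $\|\cdot\|$ Euclidean. A set-valued $S:Y\rightrightarrows X$ between metric spaces is $q$-order calm at $(\bar y,\bar x)\in\operatorname{gph}S$ if there exist $\tau>0$ and neighbourhoods $U$ of $\bar x$, $V$ of $\bar y$ with $\tau\,d(x,S(\bar y))\le d(y,\bar y)^q$ for all $y\in V$, $x\in S(y)\cap U$. *)

(* Defs.v *)
From HB Require Import structures.
From mathcomp Require Import all_boot all_order all_algebra.
From mathcomp Require Import all_classical all_reals all_analysis.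
Set Implicit Arguments. Unset Strict Implicit. Unset Printing Implicit Defensive.
Import Order.TTheory GRing.Theory Num.Theory.
Import numFieldNormedType.Exports.
Local Open Scope classical_set_scope.
Local Open Scope ring_scope.

Section Defs.
Variables (R : realType) (n : nat).

Definition dotp (x y : 'rV[R]_n) : R := \sum_(i < n) x 0 i * y 0 i.
Definition enorm (x : 'rV[R]_n) : R := Num.sqrt (dotp x x).

Definition dist_set (x : 'rV[R]_n) (S : set 'rV[R]_n) : R :=
  inf [set enorm (x - s) | s in S].

Definition convex_fun (h : 'rV[R]_n -> R) : Prop :=
  forall (x y : 'rV[R]_n) (l : R), 0 <= l -> l <= 1 ->
    h (l *: x + (1 - l) *: y) <= l * h x + (1 - l) * h y.

Definition subdiff (h : 'rV[R]_n -> R) (x : 'rV[R]_n) : set 'rV[R]_n :=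
  [set v | forall y, h x + dotp v (y - x) <= h y].

(* sup norm on C(T,R), for b represented as a function Z -> R continuous on T *)
Definition supnorm {Z : Type} (T : set Z) (b : Z -> R) : R :=
  sup [set `|b t| | t in T].

Variables (Z : pseudoMetricType R) (T : set Z)
  (f : 'rV[R]_n -> R) (g : Z -> 'rV[R]_n -> R).

Definition feasible (b : Z -> R) : set 'rV[R]_n :=
  [set x | forall t, T t -> g t x <= b t].

Definition optset (c : 'rV[R]_n) (b : Z -> R) : set 'rV[R]_n :=
  [set x | feasible b x /\
           forall y, feasible b y -> f x + dotp c x <= f y + dotp c y].

Definition levelset (cbar : 'rV[R]_n) (alpha : R) (b : Z -> R) : set 'rV[R]_n :=
  [set x | f x + dotp cbar x <= alpha /\ feasible b x].

Definition fbar (cbar xbar : 'rV[R]_n) (bbar : Z -> R) (x : 'rV[R]_n) : R :=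
  sup ([set f x - f xbar + dotp cbar (x - xbar)] `|`
       [set g t x - bbar t | t in T]).

(* q-order calmness of L at ((alphabar, bbar), xbar), with metric balls as
   neighbourhoods; the parameter space R x C(T,R) carries the metric
   max(|alpha - alpha'|, ||b - b'||_oo). *)
Definition L_qcalm (cbar : 'rV[R]_n) (q : R) (alphabar : R) (bbar : Z -> R)
    (xbar : 'rV[R]_n) : Prop :=
  exists tau : R, 0 < tau /\
  exists eps : R, 0 < eps /\
  exists del : R, 0 < del /\
  forall (alpha : R) (b : Z -> R), {within T, continuous b} ->
    Num.max `|alpha - alphabar| (supnorm T (b \- bbar)) < del ->
    forall x, levelset cbar alpha b x -> enorm (x - xbar) < eps ->
      tau * dist_set x (levelset cbar alphabar bbar)
        <= (Num.max `|alpha - alphabar| (supnorm T (b \- bbar))) `^ q.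

End Defs.

(* Main.v *)
Require Import Defs.
From HB Require Import structures.
From mathcomp Require Import all_boot all_order all_algebra.
From mathcomp Require Import all_classical all_reals all_analysis.
From mathcomp Require Import ring lra.
Import Order.TTheory GRing.Theory Num.Theory.
Import numFieldNormedType.Exports.
Local Open Scope classical_set_scope.
Local Open Scope ring_scope.

Section Dot.
Context {R : realType} {n : nat}.
Implicit Types x y z : 'rV[R]_n.
Local Notation dot := (@dotp R n).

Lemma dotpC x y : dot x y = dot y x.
Proof. by apply: eq_bigr => i _; rewrite mulrC. Qed.
Lemma dotpDr x y z : dot x (y + z) = dot x y + dot x z.
Proof. by rewrite /dotp -big_split; apply: eq_bigr => i _; rewrite mxE mulrDr. Qed.
Lemma dotpDl x y z : dot (x + y) z = dot x z + dot y z.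
Proof. by rewrite dotpC dotpDr !(dotpC z). Qed.
Lemma dotpZr a x y : dot x (a *: y) = a * dot x y.
Proof. by rewrite /dotp mulr_sumr; apply: eq_bigr => i _; rewrite mxE mulrCA. Qed.
Lemma dotpZl a x y : dot (a *: x) y = a * dot x y.
Proof. by rewrite dotpC dotpZr dotpC. Qed.
Lemma dotpNr x y : dot x (- y) = - dot x y.
Proof. by rewrite -scaleN1r dotpZr mulN1r. Qed.
Lemma dotpNl x y : dot (- x) y = - dot x y.
Proof. by rewrite dotpC dotpNr dotpC. Qed.
Lemma dotpBr x y z : dot x (y - z) = dot x y - dot x z.
Proof. by rewrite dotpDr dotpNr. Qed.
Lemma dotpBl x y z : dot (x - y) z = dot x z - dot y z.
Proof. by rewrite dotpDl dotpNl. Qed.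
Lemma dotp0r x : dot x 0 = 0.
Proof. by rewrite -(scale0r 0) dotpZr mul0r. Qed.
Lemma dotp0l x : dot 0 x = 0.
Proof. by rewrite dotpC dotp0r. Qed.
Lemma dotp_ge0 x : 0 <= dot x x.
Proof. by apply: sumr_ge0 => i _; rewrite -expr2 sqr_ge0. Qed.
Lemma dotp_eq0 x : dot x x = 0 -> x = 0.
Proof.
move=> /psumr_eq0P H; apply/rowP => i; rewrite mxE.
have /eqP := H (fun j _ => ltac:(by rewrite -expr2 sqr_ge0)) i isT.
by rewrite mulf_eq0 => /orP[] /eqP ->.
Qed.
Lemma enorm_ge0 x : 0 <= enorm x.
Proof. exact: sqrtr_ge0. Qed.
Lemma enorm_sq x : enorm x ^+ 2 = dot x x.
Proof. by rewrite sqr_sqrtr // dotp_ge0. Qed.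
Lemma enorm_gt0 x : x != 0 -> 0 < enorm x.
Proof.
move=> x0; rewrite lt_neqAle enorm_ge0 andbT; apply/eqP => E.
by move/eqP: x0; apply; apply: dotp_eq0; rewrite -enorm_sq -E expr0n.
Qed.

Lemma CS x y : dot x y <= enorm x * enorm y.
Proof.
have [C0|C0] := lerP (dot x y) 0.
  by apply: le_trans C0 _; rewrite mulr_ge0 // enorm_ge0.
set A := dot x x; set B := dot y y; set C := dot x y.
have key t : 0 <= t ^+ 2 * A - 2 * t * C + B.
  have := dotp_ge0 (t *: x - y).
  rewrite dotpBl !dotpBr !dotpZl !dotpZr (dotpC y x) -/A -/B -/C.
  by move=> H; apply: le_trans H _; rewrite le_eqVlt; apply/orP; left; apply/eqP; ring.
have A0 : 0 < A.
  rewrite lt_neqAle dotp_ge0 andbT; apply/eqP => A0.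
  have := key ((B + 1) / (2 * C)); rewrite -A0 mulr0 add0r.
  have -> : 2 * ((B + 1) / (2 * C)) * C = B + 1.
    by field; rewrite gt_eqF.
  lra.
have H : C ^+ 2 <= A * B.
  have := key (C / A).
  have -> : (C / A) ^+ 2 * A - 2 * (C / A) * C + B = (A * B - C ^+ 2) / A.
    by field; rewrite gt_eqF.
  by rewrite pmulr_lge0 ?invr_gt0 // subr_ge0.
rewrite /enorm -sqrtrM ?dotp_ge0 //.
have -> : C = Num.sqrt (C ^+ 2) by rewrite sqrtr_sqr ger0_norm // ltW.
by rewrite ler_sqrt // mulr_ge0 // ?dotp_ge0 // ltW.
Qed.

Lemma dot_lb (v u : 'rV[R]_n) d : (forall i, `|u 0 i| <= d) ->
  - ((\sum_i `|v 0 i|) * d) <= dot v u.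
Proof.
move=> Hu; rewrite mulr_suml -sumrN; apply: ler_sum => i _.
have : `|v 0 i * u 0 i| <= `|v 0 i| * d by rewrite normrM ler_wpM2l.
by rewrite ler_norml => /andP[].
Qed.

End Dot.
Section HBsec.
Context {R : realType} {n : nat}.
Local Notation dot := (@dotp R n).

Lemma convcomb (x a b : 'rV[R]_n) (l : R) :
  l *: (x + a) + (1 - l) *: (x + b) = x + (l *: a + (1 - l) *: b).
Proof.
by rewrite !scalerDr addrACA -scalerDl (addrC l) subrK scale1r.
Qed.

Lemma dotp_delta (x : 'rV[R]_n) j : dot x (delta_mx 0 j) = x 0 j.
Proof.
rewrite /dotp (bigD1 j) //= big1 => [|i /negPf ij]; rewrite mxE ?eqxx ?ij /=.
  by rewrite mulr1 addr0.
by rewrite mulr0.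
Qed.

Definition Vk k (u : 'rV[R]_n) := forall i : 'I_n, (k <= i)%N -> u 0 i = 0.


Lemma HB_step (gg : 'rV[R]_n -> R) (k : nat) (kn : (k < n)%N) (v : 'rV[R]_n) :
  convex_fun gg -> Vk k v -> (forall u, Vk k u -> dot v u <= gg u) ->
  exists v', Vk k.+1 v' /\ (forall u, Vk k.+1 u -> dot v' u <= gg u).
Proof.
move=> cg Vv Hv.
pose j : 'I_n := Ordinal kn.
pose e : 'rV[R]_n := delta_mx 0 j.
have VkD u1 u2 : Vk k u1 -> Vk k u2 -> forall a b, Vk k (a *: u1 + b *: u2).
  by move=> V1 V2 a b i ki; rewrite !mxE V1 // V2 // !mulr0 addr0.
have key u1 u2 s t : Vk k u1 -> Vk k u2 -> 0 < s -> 0 < t ->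
    (dot v u1 - gg (u1 - t *: e)) / t <= (gg (u2 + s *: e) - dot v u2) / s.
  move=> V1 V2 s0 t0.
  have st0 : 0 < s + t by rewrite addr_gt0.
  pose l := s / (s + t).
  have l1 : 1 - l = t / (s + t) by rewrite /l; field; rewrite gt_eqF //.
  have l0 : 0 <= l by rewrite /l divr_ge0 // ltW.
  have l1' : l <= 1 by rewrite /l ler_pdivrMr // mul1r lerDl ltW.
  have w_eq : l *: (u1 - t *: e) + (1 - l) *: (u2 + s *: e) = l *: u1 + (1 - l) *: u2.
    apply/rowP => i; rewrite !mxE l1 /l. by field; rewrite gt_eqF.
  have := cg (u1 - t *: e) (u2 + s *: e) l l0 l1'.
  rewrite w_eq => H1.
  have := Hv _ (VkD _ _ V1 V2 l (1 - l)).
  rewrite dotpDr !dotpZr => H2.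
  have H3 := le_trans H2 H1.
  have E a b : s / (s + t) * a + t / (s + t) * b = (s * a + t * b) / (s + t).
    by field; rewrite gt_eqF.
  rewrite l1 /l !E ler_pM2r ?invr_gt0 // in H3.
  rewrite ler_pdivrMr // mulrAC ler_pdivlMr //.
  nra.
pose A := [set r | exists u1 t, [/\ Vk k u1, 0 < t & r = (dot v u1 - gg (u1 - t *: e)) / t]].
have A0 : A !=set0.
  exists ((dot v 0 - gg (0 - 1 *: e)) / 1); exists 0, 1; split => //.
  by move=> i _; rewrite mxE.
have Aub u2 s : Vk k u2 -> 0 < s -> ubound A ((gg (u2 + s *: e) - dot v u2) / s).
  by move=> V2 s0 r [u1 [t [V1 t0 ->]]]; exact: key.
have hasA : has_sup A.
  split => //; exists ((gg (0 + 1 *: e) - dot v 0) / 1).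
  by apply: Aub => // i _; rewrite mxE.
pose c := sup A.
have dve : dot v e = 0 by rewrite dotp_delta Vv.
have dee : dot e e = 1 by rewrite dotp_delta mxE !eqxx.
exists (v + c *: e); split.
  move=> i ki; rewrite !mxE Vv ?(ltnW ki) //.
  have ij : i != j by apply/eqP => ij; move: ki; rewrite ij /= ltnn.
  by rewrite (negPf ij) andbF mulr0 addr0.
move=> u Vu.
pose s := u 0 j; pose u' := u - s *: e.
have Vu' : Vk k u'.
  move=> i ki; rewrite !mxE.
  case: (eqVneq i j) => [->|ij]; first by rewrite eqxx mulr1 subrr.
  have ki' : (k.+1 <= i)%N.
    rewrite ltn_neqAle ki andbT; apply/eqP => ik; move/eqP: ij; apply.
    by apply/val_inj; rewrite /= ik.
  by rewrite Vu // andbF mulr0 subr0.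
have due : dot e u' = 0 by rewrite dotpC dotp_delta Vu'.
have ue : u = u' + s *: e by rewrite /u' subrK.
clearbody u'.
have -> : dot (v + c *: e) u = dot v u' + c * s.
  rewrite ue dotpDl !dotpDr !dotpZl !dotpZr dve due dee; ring.
rewrite ue.
have [s0|s0|s0] := ltgtP s 0.
- have t0 : 0 < - s by rewrite oppr_gt0.
  have H : (dot v u' - gg (u' - (- s) *: e)) / (- s) <= c.
    by apply: (ub_le_sup hasA.2); exists u', (- s); split.
  rewrite scaleNr opprK ler_pdivrMr // in H.
  nra.
- have := ge_sup A0 (Aub u' s Vu' s0).
  rewrite ler_pdivlMr // => H.
  rewrite -/c in H; nra.
- by rewrite s0 scale0r addr0 mulr0 addr0; apply: Hv.
Qed.

Lemma subgrad_exists (h : 'rV[R]_n -> R) x : convex_fun h -> exists v, subdiff h x v.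
Proof.
move=> ch.
pose gg u := h (x + u) - h x.
have cg : convex_fun gg.
  move=> a b l l0 l1; rewrite /gg -convcomb.
  have := ch (x + a) (x + b) l l0 l1.
  nra.
have main : forall k, (k <= n)%N -> exists v, Vk k v /\ forall u, Vk k u -> dot v u <= gg u.
  elim=> [_|k IH kn].
    exists 0; split; first by move=> i _; rewrite mxE.
    move=> u Vu; have -> : u = 0 by apply/rowP => i; rewrite mxE Vu.
    by rewrite dotp0r /gg addr0 subrr.
  have [v [Vv Hv]] := IH (ltnW kn).
  exact: HB_step kn v cg Vv Hv.
have [v [_ Hv]] := main n (leqnn n).
exists v => y.
have := Hv (y - x) (fun i ni => False_ind _ (elimF idP (leq_gtF ni) (ltn_ord i))).
rewrite /gg (addrC x) subrK.
lra.
Qed.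

End HBsec.
Section MinSec.
Context {R : realType} {n : nat}.
Local Notation dot := (@dotp R n).

Lemma exists_min (phi : 'rV[R]_n -> R) (p : 'rV[R]_n) (rho : R) :
  convex_fun phi -> 0 < rho ->
  (forall z : 'rV[R]_n, (exists i, rho < `|z 0 i - p 0 i|) -> phi p <= phi z) ->
  exists y, forall z, phi y <= phi z.
Proof.
move=> cphi rho0 Hout.
pose K := [set v : 'rV[R]_n | forall i, `[p 0 i - rho, p 0 i + rho]%classic (v 0 i)].
have Kc : compact K.
  apply: (@rV_compact _ _ (fun i => `[p 0 i - rho, p 0 i + rho]%classic)).
  by move=> i; exact: segment_compact.
have Kp : K p.
  by move=> i /=; rewrite in_itv /= lerBlDr lerDl ltW //= lerDl ltW.
have [y [Ky Hy]] : exists y, K y /\ forall z, K z -> phi y <= phi z.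
  apply/not_existsP => Hno.
  have H y : K y -> exists z, K z /\ phi z < phi y.
    move=> Ky; have := Hno y; move/not_andP => [//|].
    move/existsNP => [z /not_implyP [Kz /negP]]; rewrite -ltNge => lt.
    by exists z.
  pose B y := [set z | K z /\ phi z < phi y].
  pose F := filter_from K B.
  have FF : Filter F.
    apply: filter_from_filter; first by exists p.
    move=> y1 y2 K1 K2.
    have [le12|lt21] := leP (phi y1) (phi y2).
      exists y1 => // z [Kz hz]; split; split => //; exact: lt_le_trans le12.
    exists y2 => // z [Kz hz]; split; split => //; exact: lt_trans lt21.
  have PF : ProperFilter F.
    apply: filter_from_proper => y Ky.
    by have [z [Kz hz]] := H y Ky; exists z.
  have FK : F K by exists p => // z [].
  have [c [Kc' clc]] := Kc F PF FK.
  have [z0 [Kz0 hz0]] := H c Kc'.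
  have [w Hw] := @subgrad_exists R n phi c cphi.
  pose M := \sum_i `|w 0 i|.
  have M0 : 0 <= M by apply: sumr_ge0 => i _.
  pose eps := phi c - phi z0.
  have eps0 : 0 < eps by rewrite subr_gt0.
  pose del := eps / (M + 1).
  have del0 : 0 < del by rewrite divr_gt0 // ltr_wpDl.
  have FB : F (B z0) by exists z0.
  have [z [[_ hz] bz]] := clc _ _ FB (nbhsx_ballx c del del0).
  have hz1 : forall i, `|(z - c) 0 i| <= del.
    move=> i; case: bz => _ /(_ 0 i); rewrite /ball /= !mxE => lt.
    by rewrite distrC ltW.
  have := @dot_lb R n w _ _ hz1.
  have := Hw z.
  rewrite -/M => h1 h2.
  have hMd : M * del < eps.
    rewrite /del mulrA ltr_pdivrMr ?ltr_wpDl //.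
    nra.
  have : phi z0 < phi z0.
    apply: lt_trans hz; rewrite /eps in hMd. lra.
  by rewrite ltxx.
exists y => z.
have [Kz|nKz] := pselect (K z); first exact: Hy.
apply: le_trans (Hy p Kp) _; apply: Hout.
move/existsNP: nKz => [i /negP Hi]; exists i.
rewrite in_itv /= in Hi.
rewrite ltNge; apply/negP => Hle; move/negP: Hi; apply.
move: Hle; rewrite ler_norml => /andP[h1 h2].
by apply/andP; split; lra.
Qed.
End MinSec.

Section ProxSec.
Context {R : realType} {n : nat}.
Local Notation dot := (@dotp R n).

Lemma dot_expand (a b : 'rV[R]_n) (s t : R) :
  dot (s *: a + t *: b) (s *: a + t *: b) =
  s ^+ 2 * dot a a + 2 * s * t * dot a b + t ^+ 2 * dot b b.
Proof.
rewrite !dotpDl !dotpDr !dotpZl !dotpZr (dotpC b a); ring.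
Qed.

Lemma dot_ge_coord (u : 'rV[R]_n) i : u 0 i ^+ 2 <= dot u u.
Proof.
rewrite /dotp (bigD1 i) //= expr2 lerDl; apply: sumr_ge0 => j _.
by rewrite -expr2 sqr_ge0.
Qed.

Lemma quad_convex (p : 'rV[R]_n) : convex_fun (fun z => dot (z - p) (z - p)).
Proof.
move=> x y l l0 l1.
have -> : l *: x + (1 - l) *: y - p = l *: (x - p) + (1 - l) *: (y - p).
  by apply/rowP => i; rewrite !mxE; ring.
move: (x - p) (y - p) => a b.
rewrite dot_expand.
have := dotp_ge0 (a - b).
rewrite dotpBl !dotpBr (dotpC b a).
set A := dot a a; set B := dot b b; set C := dot a b.
move=> H.
have H2 : 0 <= l * (1 - l) by rewrite mulr_ge0 // subr_ge0.
nra.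
Qed.

Lemma prox (h : 'rV[R]_n -> R) (p : 'rV[R]_n) (lam : R) :
  convex_fun h -> 0 < lam -> (forall z, 0 <= h z) ->
  exists y, h y + dot (y - p) (y - p) / (2 * lam) <= h p /\
            subdiff h y (lam^-1 *: (p - y)).
Proof.
move=> ch lam0 h0.
pose k := (2 * lam)^-1.
have k0 : 0 < k by rewrite invr_gt0 mulr_gt0.
pose q z := dot (z - p) (z - p).
pose phi z := h z + k * q z.
have cphi : convex_fun phi.
  move=> x y l l0 l1; rewrite /phi.
  have := ch x y l l0 l1; have := quad_convex p x y l l0 l1; rewrite -/(q _) -/(q _) -/(q _).
  move=> H1 H2.
  have H3 := ler_wpM2l (ltW k0) H1.
  nra.
pose rho := 2 * lam * h p + 1.
have rho1 : 1 <= rho by rewrite lerDr mulr_ge0 // mulr_ge0 // ltW.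
have [y Hy] : exists y, forall z, phi y <= phi z.
  apply: (@exists_min R n phi p rho cphi); first exact: lt_le_trans ltr01 rho1.
  move=> z [i Hi].
  have H1 := dot_ge_coord (z - p) i; rewrite !mxE in H1.
  have H2 : rho ^+ 2 < (z 0 i - p 0 i) ^+ 2.
    have E2 := real_normK (num_real (z 0 i - p 0 i)).
    have Hn := normr_ge0 (z 0 i - p 0 i).
    rewrite -E2; nra.
  have H3 : rho <= rho ^+ 2 by nra.
  rewrite /phi /q subrr dotp0r mulr0 addr0.
  have := h0 z.
  have E : k * (2 * lam) = 1 by rewrite /k mulVf // gt_eqF // mulr_gt0.
  rewrite /rho in H3 H2.
  have Hd : 2 * lam * h p <= dot (z - p) (z - p) by lra.
  have := ler_wpM2l (ltW k0) Hd; rewrite mulrA E mul1r.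
  lra.
exists y; split.
  have := Hy p; rewrite /phi /q subrr dotp0r mulr0 addr0.
  by rewrite mulrC.
move=> z.
pose C := dot (y - p) (z - y); pose D := dot (z - y) (z - y).
have ineq t : 0 < t -> t <= 1 -> h y - h z - 2 * k * C <= t * (k * D).
  move=> t0 t1.
  have := Hy (t *: z + (1 - t) *: y).
  have E : t *: z + (1 - t) *: y - p = 1 *: (y - p) + t *: (z - y).
    by apply/rowP => i; rewrite !mxE; ring.
  rewrite /phi /q E dot_expand -/C -/D.
  have := ch z y t (ltW t0) t1.
  set Q := dot (y - p) (y - p).
  move=> H1 H2.
  have H3 : t * (h y - h z - 2 * k * C - t * (k * D)) <= 0 by nra.
  by rewrite -subr_le0; rewrite pmulr_rle0 // in H3.
have k2 : lam^-1 = 2 * k by rewrite /k invfM mulrA mulfV ?mul1r // pnatr_eq0.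
rewrite dotpZl k2 -(opprB y p) dotpNl -/C.
set a := h y - h z - 2 * k * C in ineq.
have KD : 0 <= k * D by rewrite mulr_ge0 ?dotp_ge0 // ltW.
have : a <= 0.
  rewrite leNgt; apply/negP => a0.
  have t0 : 0 < a / (k * D + a) by rewrite divr_gt0 // ltr_wpDl.
  have t1 : a / (k * D + a) <= 1 by rewrite ler_pdivrMr ?mul1r ?lerDr // ltr_wpDl.
  have H := ineq _ t0 t1.
  have E : a / (k * D + a) * (k * D) = a * (k * D) / (k * D + a) by rewrite mulrAC.
  have P : 0 < k * D + a by lra.
  rewrite E (ler_pdivlMr _ _ P) in H.
  nra.
rewrite /a; lra.
Qed.

End ProxSec.

Lemma cvg_bound (R : realType) (u : nat -> R) (C : R) :
  (forall k, 0 <= u k <= C * k.+1%:R^-1) -> u k @[k --> \oo] --> 0.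
Proof.
move=> Hu.
apply: (@squeeze_cvgr _ _ _ _ (cst 0) (C *: @harmonic R)); last 2 first.
- exact: cvg_cst.
- by rewrite -(scaler0 _ C); exact: (cvgZl_tmp cvg_harmonic).
by apply: nearW => k; exact: Hu.
Qed.

Lemma cbound (R : realType) (S : topologicalType) (A : set S) (u : S -> R) :
  {within A, continuous u} -> compact A -> exists M, forall s, A s -> `|u s| <= M.
Proof.
move=> cu cA.
have [M [_ HM]] := compact_bounded (continuous_compact cu cA).
exists (M + 1) => s As.
by apply: (HM (M + 1)); [rewrite ltrDl | exists s].
Qed.

Section Dot2.
Context {R : realType} {n : nat}.
Local Notation dot := (@dotp R n).

Lemma enormZ (a : R) (u : 'rV[R]_n) : enorm (a *: u) = `|a| * enorm u.
Proof.
by rewrite /enorm dotpZl dotpZr mulrA -expr2 sqrtrM ?sqr_ge0 // sqrtr_sqr.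
Qed.

Lemma enorm_le (u : 'rV[R]_n) c : 0 <= c -> dot u u <= c ^+ 2 -> enorm u <= c.
Proof.
move=> c0 H; rewrite /enorm -(ger0_norm c0) -sqrtr_sqr.
by rewrite ler_sqrt // sqr_ge0.
Qed.

Lemma enorm0 : enorm (0 : 'rV[R]_n) = 0.
Proof. by rewrite /enorm dotp0r sqrtr0. Qed.

Lemma paral (a b : 'rV[R]_n) : dot (a + b) (a + b) <= 2 * dot a a + 2 * dot b b.
Proof.
have := dotp_ge0 (a - b).
rewrite dotpBl !dotpBr !dotpDl !dotpDr (dotpC b a).
lra.
Qed.

Lemma dist_ge0 x (S : set 'rV[R]_n) : S !=set0 -> 0 <= dist_set x S.
Proof.
move=> S0; apply: lb_le_inf.
  by case: S0 => s Ss; exists (enorm (x - s)); exists s.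
by move=> r [s _ <-]; exact: enorm_ge0.
Qed.

Lemma dist_le x (S : set 'rV[R]_n) s : S s -> dist_set x S <= enorm (x - s).
Proof.
move=> Ss; apply: ge_inf; last by exists s.
by exists 0 => r [s' _ <-]; exact: enorm_ge0.
Qed.

Lemma dist_lb x (S : set 'rV[R]_n) c : S !=set0 ->
  (forall s, S s -> c <= enorm (x - s)) -> c <= dist_set x S.
Proof.
move=> S0 H; apply: lb_le_inf.
  by case: S0 => s Ss; exists (enorm (x - s)); exists s.
by move=> r [s Ss <-]; exact: H.
Qed.

End Dot2.

Section Main.
Context {R : realType} {n : nat} {Z : pseudoMetricType R} (T : set Z)
  (f : 'rV[R]_n -> R) (g : Z -> 'rV[R]_n -> R) (q : R)
  (cbar : 'rV[R]_n) (bbar : Z -> R) (xbar : 'rV[R]_n).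
Context (Tc : compact T) (cf : convex_fun f) (cg : forall t, T t -> convex_fun (g t))
  (gcont : {within [set p : Z * 'rV[R]_n | T p.1], continuous (fun p => g p.1 p.2)})
  (bcont : {within T, continuous bbar})
  (opt : optset T f g cbar bbar xbar).
Local Notation dot := (@dotp R n).
Local Notation h := (fbar T f g cbar xbar bbar).
Local Notation F x := (f x - f xbar + dot cbar (x - xbar)).
Local Notation abar := (f xbar + dot cbar xbar).
Local Notation L := (levelset T f g cbar abar bbar).

Lemma gbound x : exists M, forall t, T t -> g t x - bbar t <= M.
Proof.
have [M1 H1] := @cbound R _ (T `*` [set x]) (fun p => g p.1 p.2)
  (continuous_subspaceW (fun p (Hp : (T `*` [set x]) p) => Hp.1) gcont)
  (compact_setX Tc (@compact_set1 _ x)).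
have [M2 H2] := @cbound R _ _ _ bcont Tc.
exists (M1 + M2) => t Tt.
have := H1 (t, x) (conj Tt erefl); have := H2 t Tt => /= h2 h1.
have := ler_normlW h1; rewrite ler_norml in h2; case/andP: h2 => h2 _.
lra.
Qed.

Lemma hsup x : has_sup ([set F x] `|` [set g t x - bbar t | t in T]).
Proof.
split; first by exists (F x); left.
have [M HM] := gbound x.
exists (Num.max (F x) M) => r [->|[t Tt <-]].
  by rewrite le_max lexx.
by rewrite le_max HM ?orbT.
Qed.

Lemma h_ge_F x : F x <= h x.
Proof. by apply: (ub_le_sup (hsup x).2); left. Qed.

Lemma h_ge_g x t : T t -> g t x - bbar t <= h x.
Proof. by move=> Tt; apply: (ub_le_sup (hsup x).2); right; exists t. Qed.

Lemma h_le x a : F x <= a -> (forall t, T t -> g t x - bbar t <= a) -> h x <= a.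
Proof.
move=> HF Hg; apply: ge_sup; first by exists (F x); left.
by move=> r [->|[t Tt <-]] //; apply: Hg.
Qed.

Lemma h_conv : convex_fun h.
Proof.
move=> x y l l0 l1.
have l1' : 0 <= 1 - l by rewrite subr_ge0.
apply: h_le.
  have := cf x y l l0 l1.
  have -> : l *: x + (1 - l) *: y - xbar = l *: (x - xbar) + (1 - l) *: (y - xbar).
    by apply/rowP => i; rewrite !mxE; ring.
  rewrite dotpDr !dotpZr => H.
  have := ler_wpM2l l0 (h_ge_F x); have := ler_wpM2l l1' (h_ge_F y).
  lra.
move=> t Tt.
have := cg t Tt x y l l0 l1.
have := ler_wpM2l l0 (h_ge_g x t Tt); have := ler_wpM2l l1' (h_ge_g y t Tt).
lra.
Qed.

Lemma h_ge0 z : 0 <= h z.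
Proof.
have [[t [Tt Ht]]|Hno] := pselect (exists t, T t /\ 0 < g t z - bbar t).
  exact: le_trans (ltW Ht) (h_ge_g z t Tt).
have feas : feasible T g bbar z.
  move=> t Tt; rewrite -subr_le0 leNgt; apply/negP => Ht; apply: Hno.
  by exists t.
have := opt.2 z feas; have := h_ge_F z; rewrite dotpBr.
lra.
Qed.

Lemma hL x : L x <-> h x <= 0.
Proof.
split.
  move=> [H1 H2]; apply: h_le; first by rewrite dotpBr; lra.
  by move=> t Tt; rewrite subr_le0; apply: H2.
move=> H; split.
  by have := h_ge_F x; rewrite dotpBr; lra.
by move=> t Tt; have := h_ge_g x t Tt; lra.
Qed.

Lemma h_opt s : optset T f g cbar bbar s -> h s <= 0.
Proof.
move=> [fs os]; apply/hL; split => //.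
exact: os xbar opt.1.
Qed.

Lemma hxbar : h xbar <= 0.
Proof. exact: h_opt opt. Qed.

Definition Pgood (k : nat) (a : R) (y v : 'rV[R]_n) :=
  (0 < h y /\ h y < a /\ h y < k.+1%:R^-1) /\
  (enorm (y - xbar) <= 2 * k.+1%:R^-1 /\ enorm v <= 4 * k.+1%:R^-1) /\
  (subdiff h y v /\ v != 0).

Lemma core (q0 : 0 < q) (q1 : q <= 1) (NC : ~ L_qcalm T f g cbar q abar bbar xbar)
  (k : nat) (a : R) : 0 < a -> exists y v, Pgood k a y v.
Proof.
move=> a0.
set N : R := k.+1%:R.
have N0 : 0 < N by rewrite ltr0n.
have N1 : N^-1 <= 1 by rewrite invf_le1 // ler1n.
have Lxbar : L xbar by apply/hL; exact: hxbar.
have [//|Hno] := pselect (exists y v, Pgood k a y v).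
exfalso; apply: NC.
exists N^-1; split; first by rewrite invr_gt0.
exists N^-1; split; first by rewrite invr_gt0.
exists (Num.min a N^-1); split; first by rewrite lt_min a0 invr_gt0.
move=> alpha b cb hdel x Lx hx.
set dl := Num.max _ _ in hdel *.
set d := dist_set x _.
rewrite leNgt; apply/negP => Hgt; apply: Hno.
have dl0 : 0 <= dl by rewrite le_max normr_ge0.
move: hdel; rewrite lt_min => /andP[dla dlN].
have dl1 : dl <= 1 by apply: ltW; apply: lt_le_trans dlN N1.
have hq : dl <= dl `^ q.
  have [->|dlp] := eqVneq dl 0; first exact: powR_ge0.
  by apply: ger1_powR => //; rewrite lt_neqAle eq_sym dlp dl0 dl1.
have [Mb HMb] := @cbound R _ _ _ cb Tc.
have [Mbb HMbb] := @cbound R _ _ _ bcont Tc.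
have hsn t : T t -> `|b t - bbar t| <= supnorm T (b \- bbar).
  move=> Tt; apply: ub_le_sup; last by exists t.
  exists (Mb + Mbb) => r [s Ts <-] /=.
  apply: le_trans (ler_normB _ _) _.
  by apply: lerD; [apply: HMb | apply: HMbb].
have hxdl : h x <= dl.
  apply: h_le.
    have := Lx.1; rewrite dotpBr => H.
    apply: le_trans (_ : `|alpha - abar| <= dl); last by rewrite le_max lexx.
    apply: le_trans (ler_norm _); lra.
  move=> t Tt; have := Lx.2 t Tt => H.
  apply: le_trans (_ : supnorm T (b \- bbar) <= dl); last by rewrite le_max lexx orbT.
  apply: le_trans (hsn t Tt); apply: le_trans (ler_norm _); lra.
have d0 : 0 <= d := dist_ge0 x _ (ex_intro _ xbar Lxbar).
have dxe : d <= enorm (x - xbar) := dist_le x _ _ Lxbar.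
have hxd : h x < N^-1 * d by apply: le_lt_trans hxdl (le_lt_trans hq Hgt).
have pq := powR_ge0 dl q.
have nLx : ~ L x.
  move=> Lx'; have := dist_le x _ _ Lx'; rewrite subrr enorm0 -/d => dle.
  have dz : d = 0 by apply/eqP; rewrite eq_le dle d0.
  by move: Hgt; rewrite dz mulr0; lra.
have hx0 : 0 < h x by rewrite ltNge; apply/negP => /hL.
have dpos : 0 < d.
  rewrite lt_neqAle d0 andbT; apply/eqP => dz.
  by move: hxd; rewrite -dz mulr0; lra.
pose lam := d ^+ 2 / (4 * h x).
have lam0 : 0 < lam by apply: divr_gt0; [exact: exprn_gt0 | exact: mulr_gt0].
have [y [Hy1 Hy2]] := @prox R n _ x lam h_conv lam0 h_ge0.
set Q := dot (y - x) (y - x) in Hy1.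
have Q0 : 0 <= Q by apply: dotp_ge0.
have hy0' := h_ge0 y.
have HQ : Q <= d ^+ 2 / 2.
  have : Q / (2 * lam) <= h x by lra.
  have l2 : 0 < 2 * lam by rewrite mulr_gt0.
  rewrite (ler_pdivrMr _ _ l2) => H.
  have E : h x * (2 * lam) = d ^+ 2 / 2.
    rewrite /lam; field; rewrite ?gt_eqF //.
  by rewrite -E.
have Qx : dot (x - y) (x - y) = Q by rewrite /Q -opprB dotpNl dotpNr opprK.
have nLy : ~ L y.
  move=> Ly; have := dist_le x _ _ Ly; rewrite -/d => H.
  have H2 : d ^+ 2 <= Q.
    rewrite -Qx -enorm_sq; have := enorm_ge0 (x - y); nra.
  nra.
have hy0 : 0 < h y by rewrite ltNge; apply/negP => /hL.
have hyx : h y <= h x.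
  have : 0 <= Q / (2 * lam) by rewrite divr_ge0 // mulr_ge0 // ltW.
  lra.
have exy : enorm (x - y) <= d.
  by apply: enorm_le => //; rewrite Qx; nra.
rewrite /Pgood -/N.
exists y, (lam^-1 *: (x - y)).
split; [split; [|split]|split; [split|split]].
- exact: hy0.
- exact: le_lt_trans hyx (le_lt_trans hxdl dla).
- exact: le_lt_trans hyx (le_lt_trans hxdl dlN).
- have e0 := enorm_ge0 (x - xbar).
  apply: enorm_le; first by rewrite mulr_ge0 // invr_ge0 ltW.
  have -> : y - xbar = (y - x) + (x - xbar) by rewrite addrA subrK.
  apply: le_trans (paral _ _) _.
  rewrite -/Q -enorm_sq.
  have e2 : enorm (x - xbar) ^+ 2 <= N^-1 ^+ 2.
    by rewrite ler_pXn2r // ?nnegrE ?invr_ge0 ?ltW.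
  have d2 : d ^+ 2 <= enorm (x - xbar) ^+ 2 by rewrite ler_pXn2r // ?nnegrE.
  have E4 : (2 / N) ^+ 2 = 4 * N^-1 ^+ 2 by ring.
  rewrite E4.
  have n0 : 0 <= N^-1 ^+ 2 by rewrite sqr_ge0.
  move: n0 e2; move: (N^-1) => M n0 e2.
  lra.
- have il0 : 0 <= lam^-1 by rewrite invr_ge0 ltW.
  rewrite enormZ (ger0_norm il0).
  apply: le_trans (ler_wpM2l il0 exy) _.
  have -> : lam^-1 * d = 4 * h x / d.
    by rewrite /lam; field; rewrite ?gt_eqF //.
  rewrite ler_pdivrMr //.
  have E4 : 4 / N * d = 4 * (N^-1 * d) by ring.
  rewrite E4.
  move: hxd; move: (N^-1 * d) => M hxd.
  lra.
- exact: Hy2.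
- apply/eqP => v0; have := Hy2 xbar; rewrite v0 dotp0l addr0.
  have := hxbar; lra.
Qed.

End Main.

Theorem proposition4p4 (R : realType) (n : nat) (Z : pseudoMetricType R)
  (T : set Z) (f : 'rV[R]_n -> R) (g : Z -> 'rV[R]_n -> R) (q : R)
  (cbar : 'rV[R]_n) (bbar : Z -> R) (xbar : 'rV[R]_n) :
  hausdorff_space Z -> compact T -> T != setT ->
  convex_fun f -> (forall t, T t -> convex_fun (g t)) ->
  {within [set p : Z * 'rV[R]_n | T p.1], continuous (fun p => g p.1 p.2)} ->
  0 < q -> q <= 1 ->
  {within T, continuous bbar} ->
  optset T f g cbar bbar xbar ->
  ~ L_qcalm T f g cbar q (f xbar + dotp cbar xbar) bbar xbar ->
  exists (x v : nat -> 'rV[R]_n),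
    enorm (x k - xbar) @[k --> \oo] --> 0 /\
    (forall k, 0 < fbar T f g cbar xbar bbar (x k)) /\
    (forall k, fbar T f g cbar xbar bbar (x k.+1) < fbar T f g cbar xbar bbar (x k)) /\
    fbar T f g cbar xbar bbar (x k) @[k --> \oo] --> 0 /\
    (forall k, subdiff (fbar T f g cbar xbar bbar) (x k) (v k) /\ v k != 0) /\
    enorm (v k) @[k --> \oo] --> 0 /\
    (forall k, dist_set (x k) (optset T f g cbar bbar)
                 >= fbar T f g cbar xbar bbar (x k) / enorm (v k)).
Proof.
move=> _ Tc _ cf cg gcont q0 q1 bcont opt NC.
have core' : forall ka : nat * R, exists yv : 'rV[R]_n * 'rV[R]_n,
    0 < ka.2 -> Pgood T f g cbar bbar xbar ka.1 ka.2 yv.1 yv.2.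
  move=> [k a]; have [a0|a0] := ltP 0 a.
    have [y [v H]] := @core R n Z T f g q cbar bbar xbar Tc cf cg gcont bcont opt q0 q1 NC k a a0.
    by exists (y, v).
  by exists (0, 0).
have [ch Hch] := choice core'.
pose sq := fix sq (k : nat) : 'rV[R]_n * 'rV[R]_n :=
  if k is k'.+1 then ch (k, fbar T f g cbar xbar bbar (sq k').1) else ch (0%N, 1).
have Hsq : forall k, Pgood T f g cbar bbar xbar k
    (if k is k'.+1 then fbar T f g cbar xbar bbar (sq k').1 else 1) (sq k).1 (sq k).2.
  elim => [|k IH]; first exact: (Hch (0%N, 1) ltr01).
  exact: (Hch (k.+1, _) IH.1.1).
exists (fun k => (sq k).1), (fun k => (sq k).2).
split; [|split; [|split; [|split; [|split; [|split]]]]].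
- apply: (@cvg_bound R _ 2) => k; have := (Hsq k).2.1.1.
  by rewrite enorm_ge0.
- by move=> k; exact: (Hsq k).1.1.
- by move=> k; exact: (Hsq k.+1).1.2.1.
- apply: (@cvg_bound R _ 1) => k; have [[H1 [_ H3]] _] := Hsq k.
  by rewrite ltW //= mul1r ltW.
- by move=> k; exact: (Hsq k).2.2.
- apply: (@cvg_bound R _ 4) => k; have := (Hsq k).2.1.2.
  by rewrite enorm_ge0.
- move=> k; have [[hy0 _] [_ [Hsub v0]]] := Hsq k.
  set y := (sq k).1; set v := (sq k).2.
  have ev0 : 0 < enorm v by apply: enorm_gt0.
  apply: dist_lb; first by exists xbar.
  move=> s os.
  have := Hsub s; have := @h_opt R n Z T f g cbar bbar xbar Tc gcont bcont opt s os.
  rewrite -(opprB y s) dotpNr => hs H.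
  have := CS v (y - s).
  rewrite ler_pdivrMr // mulrC => HC.
  apply: le_trans HC; lra.
Qed.
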